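(* Let $q,r$ be integers with $1\le q\le r$ and set $N=2^{r-q}$. Define the $1$-periodic function $f_r(\varphi)=2^{-r}\frac{\sin^2(\pi 2^r\varphi)}{\sin^2(\pi\varphi)}$ (extended continuously by $f_r(\varphi)=2^r$ at integer $\varphi$), and $$F_{r,q}(\varphi)=2^{q-r}\sum_{k=0}^{N} f_r\!\left(\varphi-k\,2^{-r}\right),\qquad G_q(\varphi)=\begin{cases}2^q,& 0\le\varphi<2^{-q},\\ 0,& 2^{-q}\le \varphi\le 1.\end{cases}$$ Then $$\int_0^1\left|F_{r,q}(\varphi)-G_q(\varphi)\right|\,d\varphi\le 2^{q-r+2}\left(1+\frac{\ln(2^{r-q})}{\pi^2}\right).$$
   Context: $f_r(\varphi)=2^r|\alpha_0(\varphi)|^2$, where $\alpha_s(\varphi)=\frac{1}{2^r}\frac{1-\exp(2\pi i(2^r\varphi-s))}{1-\exp(2\pi i(\varphi-s/2^r))}$ is the amplitude for outcome $s$ of quantum phase estimation with $r$ ancilla qubits on an eigenphase $\varphi$; $F_{r,q}$ describes the (rescaled) weight with which eigenphases are kept when the first $q$ of the $r$ ancilla qubits are measured, and $G_q$ is the corresponding ideal rectangular window. *)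

(* Defs.v *)
From Stdlib Require Import Reals Lra Lia.
Open Scope R_scope.

Definition f_r (r : nat) (phi : R) : R :=
  if Req_EM_T (sin (PI * phi)) 0 then 2 ^ r
  else / 2 ^ r * (sin (PI * 2 ^ r * phi)) ^ 2 / (sin (PI * phi)) ^ 2.

(* F_{r,q}(phi) = 2^{q-r} sum_{k=0}^{N} f_r(phi - k 2^{-r}),  N = 2^{r-q}.
   sum_f_R0 g n = g 0 + ... + g n (n+1 terms). *)
Definition F_rq (r q : nat) (phi : R) : R :=
  2 ^ q / 2 ^ r *
  sum_f_R0 (fun k => f_r r (phi - INR k / 2 ^ r)) (2 ^ (r - q))%nat.

Definition G_q (q : nat) (phi : R) : R :=
  if Rle_dec 0 phi then (if Rlt_dec phi (/ 2 ^ q) then 2 ^ q else 0) else 0.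

(* Main.v *)
Require Import Defs.
From Stdlib Require Import Reals Lra Lia.
Open Scope R_scope.

Fixpoint Dm (m : nat) (x : R) : R :=
  match m with O => 1 | S m' => Dm m' x + 2 * cos (2 * INR (S m') * x) end.
Fixpoint SD (n : nat) (x : R) : R :=
  match n with O => 0 | S n' => SD n' x + Dm n' x end.

Lemma pyth x : sin x * sin x + cos x * cos x = 1.
Proof. pose proof (sin2_cos2 x). unfold Rsqr in H. lra. Qed.

Lemma Dm_sin m x : sin x * Dm m x = sin ((2 * INR m + 1) * x).
Proof.
induction m as [|m IH]; cbn [Dm].
- simpl. rewrite Rmult_1_r. f_equal. ring.
- set (A := (2 * INR m + 1) * x).
  replace (2 * INR (S m) * x) with (A + x) by (unfold A; rewrite S_INR; ring).
  replace ((2 * INR (S m) + 1) * x) with ((A + x) + x) by (unfold A; rewrite S_INR; ring).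
  rewrite Rmult_plus_distr_l, IH. fold A.
  rewrite !sin_plus, !cos_plus. pose proof (f_equal (fun t => sin A * t) (pyth x)). simpl in H. nra.
Qed.

Lemma SD_sin n x : sin x * sin x * SD n x = sin (INR n * x) * sin (INR n * x).
Proof.
induction n as [|n IH]; cbn [SD].
- simpl. rewrite Rmult_0_l, sin_0. ring.
- rewrite Rmult_plus_distr_l, IH.
  rewrite Rmult_assoc, Dm_sin.
  set (B := INR n * x).
  replace (INR (S n) * x) with (B + x) by (unfold B; rewrite S_INR; ring).
  replace ((2 * INR n + 1) * x) with (B + (B + x)) by (unfold B; ring).
  rewrite !sin_plus, !cos_plus. pose proof (f_equal (fun t => sin B * sin B * t) (pyth x)). pose proof (f_equal (fun t => sin x * sin x * t) (pyth B)). simpl in *. nra.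
Qed.

Lemma dl_eq f x l l' : derivable_pt_lim f x l -> l = l' -> derivable_pt_lim f x l'.
Proof. intros; subst; auto. Qed.

Lemma dl_plus f g x l1 l2 : derivable_pt_lim f x l1 -> derivable_pt_lim g x l2 ->
  derivable_pt_lim (fun y => f y + g y) x (l1 + l2).
Proof. intros. exact (derivable_pt_lim_plus _ _ _ _ _ H H0). Qed.

Lemma dl_minus f g x l1 l2 : derivable_pt_lim f x l1 -> derivable_pt_lim g x l2 ->
  derivable_pt_lim (fun y => f y - g y) x (l1 - l2).
Proof. intros. exact (derivable_pt_lim_minus _ _ _ _ _ H H0). Qed.

Lemma dl_scal a f x l : derivable_pt_lim f x l ->
  derivable_pt_lim (fun y => a * f y) x (a * l).
Proof. intros. exact (derivable_pt_lim_scal _ _ _ _ H). Qed.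

Lemma dl_divc a f x l : derivable_pt_lim f x l ->
  derivable_pt_lim (fun y => f y / a) x (l / a).
Proof. intros. apply derivable_pt_lim_ext with (fun y => / a * f y).
  { intros; unfold Rdiv; ring. }
  apply dl_eq with (/ a * l). { apply dl_scal; auto. } unfold Rdiv; ring. Qed.

Lemma dl_id x : derivable_pt_lim (fun y => y) x 1.
Proof. exact (derivable_pt_lim_id x). Qed.

Lemma dl_const c x : derivable_pt_lim (fun _ => c) x 0.
Proof. exact (derivable_pt_lim_const c x). Qed.

Lemma dl_sin_lin c x : derivable_pt_lim (fun y => sin (c * y)) x (c * cos (c * x)).
Proof.
  apply dl_eq with (cos (c * x) * c); [|ring].
  exact (derivable_pt_lim_comp (fun y => c * y) sin x c (cos (c*x))
    (dl_eq _ _ _ _ (dl_scal c _ x 1 (dl_id x)) ltac:(ring)) (derivable_pt_lim_sin _)).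
Qed.

Lemma cp_plus f g x : continuity_pt f x -> continuity_pt g x ->
  continuity_pt (fun y => f y + g y) x.
Proof. intros. exact (continuity_pt_plus _ _ _ H H0). Qed.

Lemma cp_scal a f x : continuity_pt f x -> continuity_pt (fun y => a * f y) x.
Proof. intros. exact (continuity_pt_scal _ _ _ H). Qed.

Lemma cp_const c x : continuity_pt (fun _ => c) x.
Proof. apply continuity_pt_const. intros a b; reflexivity. Qed.

Lemma cp_cos_lin c x : continuity_pt (fun y => cos (c * y)) x.
Proof.
  apply derivable_continuous_pt. exists (- c * sin (c * x)).
  apply dl_eq with (- sin (c * x) * c); [|ring].
  exact (derivable_pt_lim_comp (fun y => c * y) cos x c _
    (dl_eq _ _ _ _ (dl_scal c _ x 1 (dl_id x)) ltac:(ring)) (derivable_pt_lim_cos _)).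
Qed.

Lemma sin_mult0 x k : sin x = 0 -> sin (INR k * x) = 0.
Proof.
  intro h. induction k as [|k IH].
  - simpl. rewrite Rmult_0_l. apply sin_0.
  - rewrite S_INR, Rmult_plus_distr_r, Rmult_1_l, sin_plus, IH, h. ring.
Qed.

Lemma Dm_zero m x : sin x = 0 -> Dm m x = 2 * INR m + 1.
Proof.
  intro h. induction m as [|m IH]; cbn [Dm].
  - simpl; ring.
  - rewrite IH. replace (2 * INR (S m) * x) with (2 * (INR (S m) * x)) by ring.
    rewrite cos_2a_sin, (sin_mult0 x (S m) h). rewrite S_INR. ring.
Qed.

Lemma SD_zero n x : sin x = 0 -> SD n x = INR n * INR n.
Proof.
  intro h. induction n as [|n IH]; cbn [SD].
  - simpl; ring.
  - rewrite IH, Dm_zero by auto. rewrite S_INR. ring.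
Qed.

Fixpoint Em (m : nat) (t : R) : R :=
  match m with O => t
  | S m' => Em m' t + sin (2 * INR (S m') * (PI * t)) / (PI * INR (S m')) end.
Fixpoint SE (n : nat) (t : R) : R :=
  match n with O => 0 | S n' => SE n' t + Em n' t end.

Lemma Em_deriv m t : derivable_pt_lim (Em m) t (Dm m (PI * t)).
Proof.
  induction m as [|m IH]; cbn [Em Dm].
  - apply dl_id.
  - apply dl_plus; auto.
    apply derivable_pt_lim_ext with (fun y => sin ((2 * INR (S m) * PI) * y) / (PI * INR (S m))).
    { intro z. f_equal. f_equal. ring. }
    eapply dl_eq. { apply dl_divc. apply dl_sin_lin. }
    assert (PI <> 0) by (pose proof PI_RGT_0; lra).
    assert (INR (S m) <> 0) by (apply not_0_INR; lia).
    replace (2 * INR (S m) * PI * t) with (2 * INR (S m) * (PI * t)) by ring.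
    field; auto.
Qed.

Lemma SE_deriv n t : derivable_pt_lim (SE n) t (SD n (PI * t)).
Proof.
  induction n as [|n IH]; cbn [SE SD].
  - apply dl_const.
  - apply dl_plus; auto. apply Em_deriv.
Qed.

Lemma Dm_cont m t : continuity_pt (fun y => Dm m (PI * y)) t.
Proof.
  induction m as [|m IH]; cbn [Dm].
  - apply cp_const.
  - apply cp_plus; auto. apply cp_scal.
    apply continuity_pt_locally_ext with (fun y => cos ((2 * INR (S m) * PI) * y)) 1; [lra| |apply cp_cos_lin].
    intros; f_equal; ring.
Qed.

Lemma SD_cont n t : continuity_pt (fun y => SD n (PI * y)) t.
Proof.
  induction n as [|n IH]; cbn [SD].
  - apply cp_const.
  - apply cp_plus; auto. apply Dm_cont.
Qed.

Lemma Em_odd m t : Em m (- t) = - Em m t.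
Proof.
  induction m as [|m IH]; cbn [Em]; [ring|].
  rewrite IH. replace (2 * INR (S m) * (PI * - t)) with (- (2 * INR (S m) * (PI * t))) by ring.
  rewrite sin_neg. unfold Rdiv. ring.
Qed.

Lemma Em_refl m t : Em m (1 - t) = 1 - Em m t.
Proof.
  induction m as [|m IH]; cbn [Em]; [ring|].
  rewrite IH. replace (2 * INR (S m) * (PI * (1 - t))) with (- (2 * INR (S m) * (PI * t)) + 2 * INR (S m) * PI) by ring.
  rewrite sin_period, sin_neg. unfold Rdiv. ring.
Qed.

Lemma SE_odd n t : SE n (- t) = - SE n t.
Proof. induction n as [|n IH]; cbn [SE]; [ring|]. rewrite IH, Em_odd. ring. Qed.

Lemma SE_refl n t : SE n (1 - t) = INR n - SE n t.
Proof. induction n as [|n IH]; cbn [SE]; [simpl; ring|]. rewrite IH, Em_refl, S_INR. ring. Qed.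

Lemma INR_pow2 n : INR (2 ^ n)%nat = 2 ^ n.
Proof. rewrite pow_INR. reflexivity. Qed.

Lemma pow2_pos n : 0 < 2 ^ n.
Proof. apply pow_lt. lra. Qed.

Lemma pow2_gt_0 x : x <> 0 -> 0 < x ^ 2.
Proof. intro h. replace (x ^ 2) with (Rsqr x) by (unfold Rsqr; ring). apply Rsqr_pos_lt; auto. Qed.

Definition gg r t := SD (2 ^ r)%nat (PI * t) / 2 ^ r.
Definition PP r t := SE (2 ^ r)%nat t / 2 ^ r.

Lemma f_r_gg r t : f_r r t = gg r t.
Proof.
  unfold f_r, gg. pose proof (pow2_pos r).
  destruct (Req_EM_T (sin (PI * t)) 0) as [h|h].
  - rewrite SD_zero by auto. rewrite INR_pow2. field. lra.
  - pose proof (SD_sin (2 ^ r)%nat (PI * t)). rewrite INR_pow2 in H0.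
    replace (PI * 2 ^ r * t) with (2 ^ r * (PI * t)) by ring.
    replace (sin (2 ^ r * (PI * t)) ^ 2) with (sin (PI * t) * sin (PI * t) * SD (2 ^ r) (PI * t)) by (rewrite H0; ring).
    field. split; lra.
Qed.

Lemma f_r_nonneg r t : 0 <= f_r r t.
Proof.
  unfold f_r. pose proof (pow2_pos r).
  destruct (Req_EM_T (sin (PI * t)) 0) as [h|h]; [lra|].
  unfold Rdiv. apply Rmult_le_pos; [apply Rmult_le_pos|].
  - left; apply Rinv_0_lt_compat; lra.
  - apply pow2_ge_0.
  - left; apply Rinv_0_lt_compat. apply pow2_gt_0; auto.
Qed.

Lemma f_r_bound r t : sin (PI * t) <> 0 -> f_r r t <= / (2 ^ r * sin (PI * t) ^ 2).
Proof.
  intro h. unfold f_r. pose proof (pow2_pos r).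
  destruct (Req_EM_T (sin (PI * t)) 0) as [h'|h']; [lra|].
  assert (0 < sin (PI * t) ^ 2) by (apply pow2_gt_0; auto).
  pose proof (SIN_bound (PI * 2 ^ r * t)).
  rewrite Rinv_mult. unfold Rdiv. rewrite Rmult_assoc.
  apply Rmult_le_compat_l. { left; apply Rinv_0_lt_compat; lra. }
  rewrite <- (Rmult_1_l (/ sin (PI * t) ^ 2)) at 2.
  apply Rmult_le_compat_r. { left; apply Rinv_0_lt_compat; lra. }
  nra.
Qed.

Lemma gg_nonneg r t : 0 <= gg r t.
Proof. rewrite <- f_r_gg. apply f_r_nonneg. Qed.

Lemma PP_deriv r t : derivable_pt_lim (PP r) t (gg r t).
Proof. unfold PP, gg. apply dl_divc. apply SE_deriv. Qed.

Lemma gg_cont r t : continuity_pt (gg r) t.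
Proof.
  unfold gg. apply continuity_pt_locally_ext with (fun y => / 2 ^ r * SD (2 ^ r)%nat (PI * y)) 1; [lra| |].
  { intros; unfold Rdiv; ring. }
  apply cp_scal. apply SD_cont.
Qed.

Lemma PP_mono r a b : a <= b -> PP r a <= PP r b.
Proof.
  intro h. destruct (Req_dec a b) as [e|ne]; [subst; lra|].
  destruct (MVT_cor2 (PP r) (gg r) a b) as [c [hc _]]; [lra| intros; apply PP_deriv |].
  pose proof (gg_nonneg r c). nra.
Qed.

Lemma PP_odd r t : PP r (- t) = - PP r t.
Proof. unfold PP. rewrite SE_odd. unfold Rdiv. ring. Qed.

Lemma PP_refl r t : PP r (1 - t) = 1 - PP r t.
Proof. unfold PP. rewrite SE_refl, INR_pow2. field. pose proof (pow2_pos r). lra. Qed.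

Lemma PP_0 r : PP r 0 = 0.
Proof. pose proof (PP_odd r 0). rewrite Ropp_0 in H. lra. Qed.

Lemma PP_1 r : PP r 1 = 1.
Proof. pose proof (PP_refl r 0). rewrite Rminus_0_r, PP_0 in H. lra. Qed.

Lemma PP_half r : PP r (1/2) = 1/2.
Proof. pose proof (PP_refl r (1/2)). replace (1 - 1/2) with (1/2) in H by field. lra. Qed.

Lemma ycos y : 0 <= y <= PI -> y * cos y <= sin y.
Proof.
  intro hy. destruct (Req_dec y 0) as [e|ne]. { subst. rewrite sin_0. lra. }
  destruct (MVT_cor2 (fun z => sin z - z * cos z) (fun z => z * sin z) 0 y) as [c [hc hc2]]; [lra| |].
  - intros c _. eapply dl_eq. { apply dl_minus. apply derivable_pt_lim_sin.
      exact (derivable_pt_lim_mult (fun z => z) cos c 1 (- sin c) (dl_id c) (derivable_pt_lim_cos c)). }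
    simpl; ring.
  - cbv beta in hc. rewrite sin_0, Rmult_0_l, Rminus_0_r, Rminus_0_r in hc. pose proof (sin_gt_0 c ltac:(lra) ltac:(lra)).
    assert (0 < c * sin c * y) by (repeat apply Rmult_lt_0_compat; lra). lra.
Qed.

Lemma dl_opp f x l : derivable_pt_lim f x l -> derivable_pt_lim (fun y => - f y) x (- l).
Proof. intros. exact (derivable_pt_lim_opp _ _ _ H). Qed.

Lemma div_cmp c s y K : 0 < s -> 0 < y -> 0 < K -> y * c <= s -> c / (K * s) <= / (K * y).
Proof.
  intros hs hy hK h.
  replace (c / (K * s)) with ((y * c) * / (K * s * y)) by (field; split; lra).
  replace (/ (K * y)) with (s * / (K * s * y)) by (field; split; lra).
  apply Rmult_le_compat_r; auto. left; apply Rinv_0_lt_compat.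
  repeat apply Rmult_lt_0_compat; auto.
Qed.

Lemma sin_pos_half x : 0 < x <= 1/2 -> 0 < sin (PI * x).
Proof. intro h. pose proof PI_RGT_0. apply sin_gt_0; [apply Rmult_lt_0_compat; lra|].
  assert (PI * x <= PI * (1/2)) by (apply Rmult_le_compat_l; lra). lra. Qed.

Lemma tail_bd r a : 0 < a <= 1/2 -> 1/2 - PP r a <= / (2 ^ r * PI ^ 2 * a).
Proof.
  intro ha. pose proof (pow2_pos r) as hM. pose proof PI_RGT_0 as hPI.
  assert (0 < / (2 ^ r * PI ^ 2 * a)).
  { apply Rinv_0_lt_compat. apply Rmult_lt_0_compat; [apply Rmult_lt_0_compat; [lra| apply pow_lt; lra]|lra]. }
  destruct (Req_dec a (1/2)) as [e|ne]. { subst. rewrite PP_half. lra. }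
  set (M := 2 ^ r) in *.
  destruct (MVT_cor2 (fun x => - (cos (PI * x) / (M * PI * sin (PI * x))) - PP r x)
     (fun x => / (M * sin (PI * x) ^ 2) - gg r x) a (1/2)) as [c [hc hc2]]; [lra| |].
  - intros c hc. assert (hs : 0 < sin (PI * c)) by (apply sin_pos_half; lra).
    apply dl_minus; [|apply PP_deriv].
    eapply dl_eq. { apply dl_opp.
      apply (derivable_pt_lim_div (fun x => cos (PI * x)) (fun x => M * PI * sin (PI * x)) c
         (- sin (PI * c) * PI) (M * PI * (PI * cos (PI * c)))).
      - exact (derivable_pt_lim_comp (fun y => PI * y) cos c PI _
          (dl_eq _ _ _ _ (dl_scal PI _ c 1 (dl_id c)) ltac:(ring)) (derivable_pt_lim_cos _)).
      - apply dl_scal. apply dl_sin_lin.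
      - apply Rgt_not_eq. cbv beta. unfold Rgt. apply Rmult_lt_0_compat; [apply Rmult_lt_0_compat|]; auto. }
    pose proof (pyth (PI * c)). unfold Rsqr.
    replace (- ((- sin (PI * c) * PI * (M * PI * sin (PI * c)) - M * PI * (PI * cos (PI * c)) * cos (PI * c)) /
     (M * PI * sin (PI * c) * (M * PI * sin (PI * c)))))
     with (M * PI * PI * (sin (PI * c) * sin (PI * c) + cos (PI * c) * cos (PI * c)) / (M * PI * sin (PI * c) * (M * PI * sin (PI * c)))) by (field; repeat split; lra).
    rewrite H0. field. split; lra.
  - cbv beta in hc.
    assert (hsc : 0 < sin (PI * c)) by (apply sin_pos_half; lra).
    assert (gg r c <= / (M * sin (PI * c) ^ 2)).
    { rewrite <- f_r_gg. apply f_r_bound. lra. }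
    replace (PI * (1/2)) with (PI / 2) in hc by field. rewrite cos_PI2 in hc.
    assert (hsa : 0 < sin (PI * a)) by (apply sin_pos_half; lra).
    assert (cos (PI * a) / (M * PI * sin (PI * a)) <= / (2 ^ r * PI ^ 2 * a)).
    { replace (2 ^ r * PI ^ 2 * a) with (M * PI * (PI * a)) by (unfold M; ring).
      apply div_cmp; [lra|apply Rmult_lt_0_compat; lra|apply Rmult_lt_0_compat; lra|].
      apply ycos. split; [left; apply Rmult_lt_0_compat; lra|].
      assert (PI * a <= PI * 1) by (apply Rmult_le_compat_l; lra). lra. }
    assert (0 <= (/ (M * sin (PI * c) ^ 2) - gg r c) * (1 / 2 - a)) by (apply Rmult_le_pos; lra).
    replace (0 / (M * PI * sin (PI / 2))) with 0 in hc by (unfold Rdiv; ring).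
    rewrite PP_half in hc.
    change (2 ^ r) with M in H1.
    lra.
Qed.

Lemma PI_gt3 : 3 < PI.
Proof. pose proof PI2_3_2. lra. Qed.

Lemma ln_le y : 0 < y -> ln y <= y - 1.
Proof. intro h. pose proof (exp_ineq1_le (ln y)). rewrite exp_ln in H; lra. Qed.

Definition cc (k : nat) : R := match k with O => 1/2 | _ => / (PI ^ 2 * INR k) end.

Lemma harm n : (1 <= n)%nat -> sum_f_R0 cc n <= 1/2 + (1 + ln (INR n)) / PI ^ 2.
Proof.
  pose proof PI_gt3. assert (hP : 0 < PI ^ 2) by (apply pow_lt; lra).
  induction n as [|n IH]; intro h; [lia|].
  destruct (Nat.eq_dec n 0) as [e|ne].
  - subst. simpl. rewrite Rmult_1_r, ln_1. right. field. lra.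
  - rewrite tech5. specialize (IH ltac:(lia)).
    assert (hn : 0 < INR n) by (apply lt_0_INR; lia).
    rewrite S_INR in *. unfold cc at 2.
    assert (/ (PI ^ 2 * (INR n + 1)) <= (ln (INR n + 1) - ln (INR n)) / PI ^ 2).
    { pose proof (ln_le (INR n / (INR n + 1)) ltac:(apply Rdiv_lt_0_compat; lra)).
      replace (INR n / (INR n + 1)) with (INR n * / (INR n + 1)) in H0 by reflexivity.
      rewrite ln_mult, ln_Rinv in H0 by (try apply Rinv_0_lt_compat; lra).
      replace (INR n * / (INR n + 1) - 1) with (- / (INR n + 1)) in H0 by (field; lra).
      rewrite Rinv_mult. unfold Rdiv. rewrite (Rmult_comm (/ PI ^ 2)).
      apply Rmult_le_compat_r; [left; apply Rinv_0_lt_compat; lra | lra]. }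
    rewrite S_INR. unfold Rdiv in *. lra.
Qed.

Lemma sum_opp f n : sum_f_R0 (fun k => - f k) n = - sum_f_R0 f n.
Proof. induction n as [|n IH]; simpl; [ring|]. rewrite IH. ring. Qed.

Lemma sum_rev f n : sum_f_R0 (fun k => f (n - k)%nat) n = sum_f_R0 f n.
Proof.
  revert f. induction n as [|n IH]; intro f; [simpl; reflexivity|].
  rewrite decomp_sum by lia. simpl pred. rewrite Nat.sub_0_r.
  rewrite (sum_eq _ (fun i => f (n - i)%nat)) by (intros; reflexivity).
  rewrite IH, tech5. ring.
Qed.

Lemma sum_mono_n f n m : (forall k, 0 <= f k) -> (n <= m)%nat -> sum_f_R0 f n <= sum_f_R0 f m.
Proof.
  intros hf h. induction h; [lra|]. rewrite tech5. specialize (hf (S m)). lra.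
Qed.

Fixpoint sumn (f : nat -> R) (n : nat) : R :=
  match n with O => 0 | S n' => sumn f n' + f n' end.

Lemma sumn_sum f n : sumn f (S n) = sum_f_R0 f n.
Proof. induction n as [|n IH]; [simpl; ring|]. rewrite tech5, <- IH. reflexivity. Qed.

Lemma sumn_plus f g n : sumn (fun k => f k + g k) n = sumn f n + sumn g n.
Proof. induction n as [|n IH]; simpl; [ring|]. rewrite IH; ring. Qed.

Lemma sumn_scal c f n : sumn (fun k => c * f k) n = c * sumn f n.
Proof. induction n as [|n IH]; simpl; [ring|]. rewrite IH; ring. Qed.

Lemma sumn_const c n : sumn (fun _ => c) n = INR n * c.
Proof. induction n as [|n IH]; simpl sumn; [simpl; ring|]. rewrite IH, S_INR; ring. Qed.

Lemma sumn_ext f g n : (forall k, (k < n)%nat -> f k = g k) -> sumn f n = sumn g n.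
Proof. induction n as [|n IH]; intro h; simpl; [reflexivity|]. rewrite IH, h by auto. reflexivity. Qed.

Lemma sumn_tele u n : sumn (fun k => u k - u (S k)) n = u O - u n.
Proof. induction n as [|n IH]; simpl; [ring|]. rewrite IH; ring. Qed.

Lemma sumn_swap (a : nat -> nat -> R) n1 n2 :
  sumn (fun k => sumn (fun m => a m k) n1) n2 = sumn (fun m => sumn (fun k => a m k) n2) n1.
Proof.
  induction n1 as [|n1 IH]; simpl.
  - rewrite sumn_const. ring.
  - rewrite sumn_plus, IH. reflexivity.
Qed.

Lemma SD_sumn n x : SD n x = sumn (fun m => Dm m x) n.
Proof. induction n as [|n IH]; simpl; auto. rewrite IH; reflexivity. Qed.

Lemma cos_roots (Mn d : nat) x : (1 <= d)%nat -> (d < Mn)%nat ->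
  sumn (fun k => cos (2 * INR d * (x - PI * INR k / INR Mn))) Mn = 0.
Proof.
  intros h1 h2. pose proof PI_RGT_0.
  assert (hM : 0 < INR Mn) by (apply lt_0_INR; lia).
  assert (hd : 0 < INR d) by (apply lt_0_INR; lia).
  assert (hdM : INR d < INR Mn) by (apply lt_INR; lia).
  set (h := PI * INR d / INR Mn).
  assert (hs : 0 < sin h).
  { apply sin_gt_0; unfold h.
    - apply Rdiv_lt_0_compat; [apply Rmult_lt_0_compat|]; lra.
    - apply Rmult_lt_reg_r with (INR Mn); auto. unfold Rdiv. rewrite Rmult_assoc, Rinv_l by lra.
      rewrite Rmult_1_r. apply Rmult_lt_compat_l; lra. }
  set (u := fun k => sin (2 * INR d * x - INR k * (2 * h) + h)).
  assert (e : forall k, cos (2 * INR d * (x - PI * INR k / INR Mn)) = (u k - u (S k)) / (2 * sin h)).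
  { intro k. unfold u. rewrite S_INR.
    set (A := 2 * INR d * x - INR k * (2 * h)).
    replace (2 * INR d * (x - PI * INR k / INR Mn)) with A by (unfold A, h; field; lra).
    replace (2 * INR d * x - (INR k + 1) * (2 * h) + h) with (A - h) by (unfold A; ring).
    unfold Rminus. rewrite !sin_plus, sin_neg, cos_neg. field. lra. }
  rewrite (sumn_ext _ (fun k => / (2 * sin h) * (u k - u (S k)))) by (intros; rewrite e; unfold Rdiv; ring).
  rewrite sumn_scal, sumn_tele. unfold u.
  replace (2 * INR d * x - INR 0 * (2 * h) + h) with ((2 * INR d * x - INR Mn * (2 * h) + h) + 2 * INR d * PI)
    by (unfold h; simpl; field; lra).
  rewrite sin_period. ring.
Qed.

Lemma Dm_roots (Mn m : nat) x : (m < Mn)%nat ->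
  sumn (fun k => Dm m (x - PI * INR k / INR Mn)) Mn = INR Mn.
Proof.
  intro h. induction m as [|m IH].
  - cbn [Dm]. rewrite sumn_const. ring.
  - cbn [Dm]. rewrite sumn_plus, IH by lia. rewrite sumn_scal.
    replace (fun k => cos (2 * INR (S m) * (x - PI * INR k / INR Mn))) with
      (fun k => cos (2 * INR (S m) * (x - PI * INR k / INR Mn))) by reflexivity.
    rewrite cos_roots by lia. ring.
Qed.

Lemma SD_roots (Mn : nat) x : sumn (fun k => SD Mn (x - PI * INR k / INR Mn)) Mn = INR Mn * INR Mn.
Proof.
  rewrite (sumn_ext _ (fun k => sumn (fun m => Dm m (x - PI * INR k / INR Mn)) Mn)) by (intros; apply SD_sumn).
  rewrite sumn_swap.
  rewrite (sumn_ext _ (fun _ => INR Mn)) by (intros; apply Dm_roots; auto).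
  apply sumn_const.
Qed.
From Stdlib Require Import Reals Lra Lia RList List.


Lemma int_ext_open (f g : R -> R) (a b : R) : a < b ->
  (forall x, a < x < b -> f x = g x) ->
  Riemann_integrable f a b -> Riemann_integrable g a b.
Proof.
intros hab hfg rif eps. destruct (rif eps) as [phi [psi [P1 P2]]].
set (phi' := fun t => if Rlt_dec a t then if Rlt_dec t b then phi t
   else g t - f t + phi t else g t - f t + phi t).
assert (hs : IsStepFun phi' a b).
{ destruct (pre phi) as [l [lf Hadapt]]. exists l; exists lf.
  unfold adapted_couple in *. destruct Hadapt as (h1&h2&h3&h4&h5).
  repeat split; auto. intros i hi. unfold constant_D_eq, open_interval in *.
  intros x hx. rewrite <- (h5 i hi x hx).
  rewrite Rmin_left in h2 by lra. rewrite Rmax_right in h3 by lra.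
  assert (a <= pos_Rl l i).
  { rewrite <- h2. apply RList_P5; auto. apply RList_P3. exists i; split; auto; lia. }
  assert (pos_Rl l (S i) <= b).
  { rewrite <- h3. apply RList_P7; auto. apply RList_P3. exists (S i); split; auto; lia. }
  unfold phi'. destruct (Rlt_dec a x); [|lra]. destruct (Rlt_dec x b); [|lra]. reflexivity. }
exists (mkStepFun hs), psi. split; [|exact P2].
intros t ht. simpl. unfold phi'.
destruct (Rlt_dec a t); [destruct (Rlt_dec t b)|].
- rewrite <- hfg by lra. apply P1; auto.
- replace (g t - (g t - f t + phi t)) with (f t - phi t) by ring. apply P1; auto.
- replace (g t - (g t - f t + phi t)) with (f t - phi t) by ring. apply P1; auto.
Qed.

Lemma ftc (f Fa : R -> R) (a b : R)
  (hd : forall x, derivable_pt_lim Fa x (f x)) (hc : forall x, continuity_pt f x)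
  (pr : Riemann_integrable f a b) : RiemannInt pr = Fa b - Fa a.
Proof.
assert (d : derivable Fa). { intro x. exists (f x). apply hd. }
assert (e : forall x, derive Fa d x = f x).
{ intro x. unfold derive. apply derive_pt_eq_0. apply hd. }
assert (c : continuity (derive Fa d)).
{ intro x. apply continuity_pt_locally_ext with f 1; [lra| |apply hc]. intros y _. symmetry. apply e. }
set (C := mkC1 c).
assert (pr2 : Riemann_integrable (derive (c1 C) (diff0 C)) a b).
{ apply Riemann_integrable_ext with f. { intros; simpl; symmetry; apply e. } exact pr. }
transitivity (RiemannInt pr2); [|apply (FTC_Riemann C pr2)].
destruct (Rle_dec a b) as [h|h].
- apply RiemannInt_P18; auto; intros; symmetry; apply e.
- rewrite (RiemannInt_P8 pr (RiemannInt_P1 pr)), (RiemannInt_P8 pr2 (RiemannInt_P1 pr2)).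
  f_equal. apply RiemannInt_P18; [lra|]. intros; symmetry; apply e.
Qed.

Lemma Mn_pos r : (1 <= 2 ^ r)%nat.
Proof. induction r; simpl; lia. Qed.

Lemma sum_gg_total r x :
  sum_f_R0 (fun k => gg r (x - INR k / 2 ^ r)) ((2 ^ r)%nat - 1) = 2 ^ r.
Proof.
  pose proof (Mn_pos r). pose proof (pow2_pos r).
  rewrite <- sumn_sum. replace (S ((2 ^ r)%nat - 1)) with (2 ^ r)%nat by lia.
  rewrite (sumn_ext _ (fun k => / 2 ^ r * SD (2 ^ r)%nat (PI * x - PI * INR k / INR (2 ^ r)%nat))).
  - rewrite sumn_scal, SD_roots, INR_pow2. field. lra.
  - intros k _. unfold gg. rewrite INR_pow2. unfold Rdiv. rewrite Rmult_comm. f_equal. f_equal. ring.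
Qed.

Lemma F_bounds r q x : (1 <= q)%nat -> (q <= r)%nat -> 0 <= F_rq r q x <= 2 ^ q.
Proof.
  intros h1 h2. pose proof (pow2_pos r). pose proof (pow2_pos q).
  assert (hc : 0 < 2 ^ q / 2 ^ r) by (apply Rdiv_lt_0_compat; lra).
  unfold F_rq. split.
  - apply Rmult_le_pos; [lra|]. apply cond_pos_sum. intro; apply f_r_nonneg.
  - apply Rle_trans with (2 ^ q / 2 ^ r * 2 ^ r); [|right; field; lra].
    apply Rmult_le_compat_l; [lra|].
    apply Rle_trans with (sum_f_R0 (fun k => f_r r (x - INR k / 2 ^ r)) ((2 ^ r)%nat - 1)).
    2:{ right. transitivity (sum_f_R0 (fun k => gg r (x - INR k / 2 ^ r)) ((2 ^ r)%nat - 1)).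
        - apply sum_eq. intros; apply f_r_gg.
        - apply sum_gg_total. }
    apply sum_mono_n; [intro; apply f_r_nonneg|].
    assert ((2 ^ (r - q) < 2 ^ r)%nat) by (apply Nat.pow_lt_mono_r; lia). lia.
Qed.

Lemma dl_sum (f : nat -> R -> R) (l : nat -> R) x n :
  (forall k, derivable_pt_lim (f k) x (l k)) ->
  derivable_pt_lim (fun y => sum_f_R0 (fun k => f k y) n) x (sum_f_R0 l n).
Proof.
  intro h. induction n as [|n IH]; simpl.
  - apply h.
  - exact (dl_plus _ _ _ _ _ IH (h (S n))).
Qed.

Lemma cp_sum (f : nat -> R -> R) x n :
  (forall k, continuity_pt (f k) x) ->
  continuity_pt (fun y => sum_f_R0 (fun k => f k y) n) x.
Proof.
  intro h. induction n as [|n IH]; simpl.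
  - apply h.
  - exact (cp_plus _ _ _ IH (h (S n))).
Qed.

Lemma dl_shift r c x : derivable_pt_lim (fun y => PP r (y - c)) x (gg r (x - c)).
Proof.
  apply dl_eq with (gg r (x - c) * 1); [|ring].
  exact (derivable_pt_lim_comp (fun y => y - c) (PP r) x 1 _
     (dl_eq _ _ (1 - 0) 1 (dl_minus _ _ _ _ _ (dl_id x) (dl_const c x)) ltac:(ring)) (PP_deriv r _)).
Qed.

Lemma cp_shift r c x : continuity_pt (fun y => f_r r (y - c)) x.
Proof.
  apply continuity_pt_locally_ext with (comp (gg r) (fun y => y - c)) 1; [lra| |].
  { intros; unfold comp; symmetry; apply f_r_gg. }
  apply continuity_pt_comp; [|apply gg_cont].
  apply derivable_continuous_pt. exists 1.
  exact (dl_eq _ _ (1 - 0) 1 (dl_minus _ _ _ _ _ (dl_id x) (dl_const c x)) ltac:(ring)).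
Qed.

Definition Phi r q x := 2 ^ q / 2 ^ r * sum_f_R0 (fun k => PP r (x - INR k / 2 ^ r)) (2 ^ (r - q))%nat.

Lemma Phi_deriv r q x : derivable_pt_lim (Phi r q) x (F_rq r q x).
Proof.
  unfold Phi, F_rq. apply dl_scal.
  eapply dl_eq. { apply dl_sum with (l := fun k => gg r (x - INR k / 2 ^ r)). intro k. apply dl_shift. }
  apply sum_eq. intros; symmetry; apply f_r_gg.
Qed.

Lemma F_cont r q x : continuity_pt (F_rq r q) x.
Proof.
  unfold F_rq. apply cp_scal. apply cp_sum with (f := fun k y => f_r r (y - INR k / 2 ^ r)).
  intro; apply cp_shift.
Qed.

Theorem mainTheorem4 (q r : nat) (hq : (1 <= q)%nat) (hqr : (q <= r)%nat) :
  exists pr : Riemann_integrable (fun phi => Rabs (F_rq r q phi - G_q q phi)) 0 1,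
    RiemannInt pr <=
      2 ^ (q + 2) / 2 ^ r * (1 + ln (2 ^ (r - q)) / PI ^ 2).
Proof.
  pose proof (pow2_pos r) as hMr. pose proof (pow2_pos q) as hMq. pose proof (pow2_pos (r - q)) as hN.
  assert (hr : 2 ^ r = 2 ^ q * 2 ^ (r - q)) by (rewrite <- pow_add; f_equal; lia).
  assert (hq2 : 2 <= 2 ^ q).
  { replace q with (S (q - 1)) by lia. simpl. pose proof (pow_R1_Rle 2 (q - 1) ltac:(lra)). lra. }
  set (L := / 2 ^ q).
  assert (hL : 0 < L < 1).
  { unfold L. split; [apply Rinv_0_lt_compat; lra|]. rewrite <- Rinv_1. apply Rinv_lt_contravar; lra. }
  assert (pr1 : Riemann_integrable (fun x => 2 ^ q - F_rq r q x) 0 L).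
  { apply continuity_implies_RiemannInt; [lra|]. intros x _.
    exact (continuity_pt_minus _ _ _ (cp_const (2 ^ q) x) (F_cont r q x)). }
  assert (eq1 : forall x, 0 < x < L -> 2 ^ q - F_rq r q x = Rabs (F_rq r q x - G_q q x)).
  { intros x hx. unfold G_q. destruct (Rle_dec 0 x); [|lra]. destruct (Rlt_dec x (/ 2 ^ q)); [|unfold L in hx; lra].
    pose proof (F_bounds r q x hq hqr). rewrite Rabs_left1 by lra. ring. }
  pose (prH1 := int_ext_open _ _ 0 L (proj1 hL) eq1 pr1).
  assert (pr2 : Riemann_integrable (F_rq r q) L 1).
  { apply continuity_implies_RiemannInt; [lra|]. intros x _. apply F_cont. }
  assert (eq2 : forall x, L < x < 1 -> F_rq r q x = Rabs (F_rq r q x - G_q q x)).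
  { intros x hx. unfold G_q. destruct (Rle_dec 0 x); [|lra]. destruct (Rlt_dec x (/ 2 ^ q)); [unfold L in hx; lra|].
    pose proof (F_bounds r q x hq hqr). rewrite Rminus_0_r, Rabs_right by lra. ring. }
  pose (prH2 := int_ext_open _ _ L 1 (proj2 hL) eq2 pr2).
  exists (RiemannInt_P24 prH1 prH2).
  rewrite <- (RiemannInt_P26 prH1 prH2).
  rewrite <- (RiemannInt_P18 pr1 prH1 ltac:(lra) eq1).
  rewrite <- (RiemannInt_P18 pr2 prH2 ltac:(lra) eq2).
  rewrite (ftc _ (fun x => 2 ^ q * x - Phi r q x) 0 L); cycle 1.
  { intro x. eapply dl_eq. { apply dl_minus; [apply dl_scal; apply dl_id| apply Phi_deriv]. } ring. }
  { intro x. exact (continuity_pt_minus _ _ _ (cp_const (2 ^ q) x) (F_cont r q x)). }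
  rewrite (ftc _ (Phi r q) L 1); cycle 1.
  { apply Phi_deriv. } { apply F_cont. }
  set (Nn := (2 ^ (r - q))%nat).
  assert (hNn : INR Nn = 2 ^ (r - q)) by apply INR_pow2.
  set (S := sum_f_R0 (fun k => PP r (INR k / 2 ^ r)) Nn).
  set (c := 2 ^ q / 2 ^ r).
  assert (Phi0 : Phi r q 0 = - c * S).
  { unfold Phi. fold Nn. rewrite (sum_eq _ (fun k => - PP r (INR k / 2 ^ r))).
    - rewrite sum_opp. fold S. fold c. ring.
    - intros. rewrite <- PP_odd. f_equal. ring. }
  assert (Phi1 : Phi r q 1 = c * (INR (Datatypes.S Nn) - S)).
  { unfold Phi. fold Nn. rewrite (sum_eq _ (fun k => 1 - PP r (INR k / 2 ^ r))).
    - rewrite minus_sum, sum_cte. fold S. fold c. ring.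
    - intros. rewrite <- PP_refl. reflexivity. }
  assert (PhiL : Phi r q L = c * S).
  { unfold Phi. fold Nn. rewrite (sum_eq _ (fun k => PP r (INR (Nn - k) / 2 ^ r))).
    - rewrite (sum_rev (fun j => PP r (INR j / 2 ^ r))). fold S. fold c. reflexivity.
    - intros i hi. f_equal. rewrite minus_INR by auto. rewrite hNn. unfold L. rewrite hr. field. lra. }
  rewrite Phi0, Phi1, PhiL.
  assert (hNle : 2 * INR Nn <= 2 ^ r).
  { rewrite hNn, hr. apply Rmult_le_compat_r; lra. }
  assert (hS : sum_f_R0 (fun k => 1/2 - cc k) Nn <= S).
  { apply sum_Rle. intros k hk. destruct k as [|k].
    - simpl. unfold Rdiv. rewrite Rmult_0_l, PP_0. lra.
    - assert (hk0 : 0 < INR (Datatypes.S k)) by (apply lt_0_INR; lia).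
      assert (hkN : INR (Datatypes.S k) <= INR Nn) by (apply le_INR; auto).
      pose proof (tail_bd r (INR (Datatypes.S k) / 2 ^ r)).
      assert (ha : 0 < INR (Datatypes.S k) / 2 ^ r <= 1/2).
      { split; [apply Rdiv_lt_0_compat; lra|]. apply Rmult_le_reg_r with (2 ^ r); auto.
        unfold Rdiv. rewrite Rmult_assoc, Rinv_l by lra. lra. }
      specialize (H ha).
      replace (2 ^ r * PI ^ 2 * (INR (Datatypes.S k) / 2 ^ r)) with (PI ^ 2 * INR (Datatypes.S k)) in H by (field; lra).
      unfold cc. lra. }
  rewrite minus_sum, sum_cte in hS.
  pose proof (harm Nn ltac:(apply Mn_pos)) as hH. rewrite hNn in hH.
  rewrite S_INR, hNn in *.
  set (C := sum_f_R0 cc Nn) in *.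
  set (l := ln (2 ^ (r - q))) in *.
  pose proof PI_gt3.
  assert (hip : 0 < / PI ^ 2 < 1/9).
  { split; [apply Rinv_0_lt_compat; apply pow_lt; lra|].
    replace (1/9) with (/ 9) by field. apply Rinv_lt_contravar; [apply Rmult_lt_0_compat; [lra|apply pow_lt; lra]|]. simpl. nra. }
  set (ip := / PI ^ 2) in *.
  assert (hcN : c * 2 ^ (r - q) = 1) by (unfold c; rewrite hr; field; lra).
  assert (hc : 0 < c) by (unfold c; apply Rdiv_lt_0_compat; lra).
  assert (hqL : 2 ^ q * L = 1) by (unfold L; field; lra).
  replace (2 ^ (q + 2) / 2 ^ r) with (4 * c) by (unfold c; rewrite pow_add; simpl; field; lra).
  unfold Rdiv in hH |- *. fold ip in hH |- *.
  assert (h1 : c * (1 / 2 * (2 ^ (r - q) + 1) - C) <= c * S) by (apply Rmult_le_compat_l; lra).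
  assert (h2 : c * C <= c * (1 / 2 + (1 + l) * ip)) by (apply Rmult_le_compat_l; unfold Rdiv in hH; lra).
  assert (h3 : c * ip <= c * (1/9)) by (apply Rmult_le_compat_l; lra).
  nra.
Qed.
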